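(* Let $p\in(0,1)$ and $x\geq 1$. Let $(\xi_n)_{n\geq1}$ be i.i.d. random variables with $\mathbf{P}(\xi_1=1)=p=1-\mathbf{P}(\xi_1=-1)$. Set $W_0:=x$, $B_1:=1$ and, for $n\geq 1$, $W_n:=W_{n-1}+\xi_nB_n$ and $B_{n+1}:=B_n2^{\xi_n}$. Let $f(x,p):=\mathbf{P}(W_n\leq 0 \text{ for some } n)$. Then $f(x,p)<1$ if and only if $x>2$ and $p<1/2$.
   Context: $W_n$ is the wealth of a gambler after $n$ rounds (initial fortune $x$) and $B_n$ is the bet at round $n$: the bet is doubled after each win ($\xi_n=1$) and halved after each loss ($\xi_n=-1$). $f(x,p)$ is the ruin probability. *)

(* Defs.v *)
From Stdlib Require Import Reals List.
From Coquelicot Require Import Coquelicot.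
Open Scope R_scope.

(* A realization of the first N coin tosses xi_1..xi_N is a list of booleans
   [b_1; ...; b_N], b_k = true meaning xi_k = 1 (a win), false meaning xi_k = -1. *)
Definition sgn (b : bool) : R := if b then 1 else -1.

(* xi_n for n >= 1 (index 0 is unused); beyond the horizon the value is irrelevant. *)
Definition xi_of (l : list bool) (n : nat) : R := sgn (nth (pred n) l true).

(* bet xi n = B_{n+1}:  B_1 = 1,  B_{n+1} = B_n * 2^{xi_n}. *)
Fixpoint bet (xi : nat -> R) (n : nat) : R :=
  match n with
  | O => 1
  | S m => bet xi m * Rpower 2 (xi (S m))
  end.

Fixpoint wealth (x : R) (xi : nat -> R) (n : nat) : R :=
  match n with
  | O => x
  | S m => wealth x xi m + xi (S m) * bet xi m
  end.

Fixpoint all_paths (N : nat) : list (list bool) :=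
  match N with
  | O => nil :: nil
  | S m => map (cons true) (all_paths m) ++ map (cons false) (all_paths m)
  end.

Definition path_prob (p : R) (l : list bool) : R :=
  fold_right Rmult 1 (map (fun b : bool => if b then p else 1 - p) l).

Definition ruined_by (x : R) (N : nat) (l : list bool) : bool :=
  existsb (fun n => if Rle_dec (wealth x (xi_of l) n) 0 then true else false)
          (seq 0 (S N)).

Definition ruin_prob_by (x p : R) (N : nat) : R :=
  fold_right Rplus 0
    (map (fun l => if ruined_by x N l then path_prob p l else 0) (all_paths N)).

(* f(x,p) = P(W_n <= 0 for some n) = lim_N P(W_n <= 0 for some n <= N)
   (continuity from below of the probability along the increasing events). *)
Definition ruin_prob (x p : R) : R := real (Lim_seq (ruin_prob_by x p)).

(* Main.v *)
Require Import Defs.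
From Stdlib Require Import Reals Lra Lia List.
From Coquelicot Require Import Coquelicot.
Open Scope R_scope.

Definition lsum {A} (f : A -> R) (L : list A) : R := fold_right Rplus 0 (map f L).

Lemma lsum_app {A} (f : A -> R) a b : lsum f (a ++ b) = lsum f a + lsum f b.
Proof. unfold lsum; induction a; simpl; [lra|rewrite IHa; lra]. Qed.

Lemma lsum_map {A B} (f : B -> R) (g : A -> B) L : lsum f (map g L) = lsum (fun a => f (g a)) L.
Proof. unfold lsum; rewrite map_map; reflexivity. Qed.

Lemma lsum_scal {A} (f : A -> R) c L : lsum (fun a => c * f a) L = c * lsum f L.
Proof. unfold lsum; induction L; simpl; [lra|rewrite IHL; lra]. Qed.

Lemma lsum_ext {A} (f g : A -> R) L : (forall a, f a = g a) -> lsum f L = lsum g L.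
Proof. intros H; unfold lsum; induction L; simpl; [lra|rewrite IHL, H; lra]. Qed.

Lemma path_prob_cons p b l : path_prob p (b :: l) = (if b then p else 1 - p) * path_prob p l.
Proof. reflexivity. Qed.

Lemma sum_paths p N : lsum (path_prob p) (all_paths N) = 1.
Proof.
  induction N; simpl. { unfold lsum; simpl; unfold path_prob; simpl; lra. }
  rewrite lsum_app, !lsum_map.
  rewrite (lsum_ext (fun a => path_prob p (true :: a)) (fun a => p * path_prob p a)) by reflexivity.
  rewrite (lsum_ext (fun a => path_prob p (false :: a)) (fun a => (1-p) * path_prob p a)) by reflexivity.
  rewrite !lsum_scal, IHN; lra.
Qed.

Lemma ruin_prob_by_eq x p N : ruin_prob_by x p N =
  lsum (fun l => if ruined_by x N l then path_prob p l else 0) (all_paths N).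
Proof. reflexivity. Qed.

Lemma ruin0 x p : ruin_prob_by x p 0 = if Rle_dec x 0 then 1 else 0.
Proof.
  unfold ruin_prob_by, ruined_by; simpl.
  destruct (Rle_dec x 0); simpl; unfold path_prob; simpl; lra.
Qed.

Lemma ruined_neg x N l : x <= 0 -> ruined_by x N l = true.
Proof.
  intros H; unfold ruined_by; simpl. destruct (Rle_dec x 0); [reflexivity|lra].
Qed.

Lemma ruin_neg x p N : x <= 0 -> ruin_prob_by x p N = 1.
Proof.
  intros H; rewrite ruin_prob_by_eq.
  rewrite (lsum_ext _ (path_prob p)). apply sum_paths.
  intros l; rewrite ruined_neg; auto.
Qed.

Definition cb (b : bool) : R := if b then 2 else / 2.
Definition xb (b : bool) (x : R) : R := if b then (x + 1) / 2 else 2 * x - 2.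

Lemma Rpower_sgn b : Rpower 2 (sgn b) = cb b.
Proof.
  destruct b; simpl. apply Rpower_1; lra.
  replace (-1) with (- (1)) by lra. rewrite Rpower_Ropp, Rpower_1; lra.
Qed.

Lemma xi_cons b l n : xi_of (b :: l) (S (S n)) = xi_of l (S n).
Proof. reflexivity. Qed.

Lemma bet_cons b l n : bet (xi_of (b :: l)) (S n) = cb b * bet (xi_of l) n.
Proof.
  induction n.
  - simpl. rewrite Rmult_1_l. unfold xi_of; simpl. rewrite Rpower_sgn; lra.
  - change (bet (xi_of (b :: l)) (S (S n))) with
      (bet (xi_of (b :: l)) (S n) * Rpower 2 (xi_of (b::l) (S (S n)))).
    rewrite IHn, xi_cons. simpl. lra.
Qed.

Lemma wealth_cons x b l n : wealth x (xi_of (b :: l)) (S n) = cb b * wealth (xb b x) (xi_of l) n.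
Proof.
  induction n.
  - simpl. unfold xi_of; simpl. destruct b; simpl; unfold sgn; field.
  - change (wealth x (xi_of (b :: l)) (S (S n))) with
      (wealth x (xi_of (b :: l)) (S n) + xi_of (b::l) (S (S n)) * bet (xi_of (b :: l)) (S n)).
    rewrite IHn, xi_cons, bet_cons. simpl. lra.
Qed.

Lemma existsb_seq_shift (f : nat -> bool) k n :
  existsb f (seq (S k) n) = existsb (fun i => f (S i)) (seq k n).
Proof.
  revert k; induction n; intros k; simpl; auto. rewrite IHn; auto.
Qed.

Lemma existsb_ext (f g : nat -> bool) L : (forall i, f i = g i) -> existsb f L = existsb g L.
Proof. intros H; induction L; simpl; auto. rewrite H, IHL; auto. Qed.

Lemma existsb_cons0 (f : nat -> bool) a L : existsb f (a :: L) = (f a || existsb f L)%bool.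
Proof. reflexivity. Qed.

Lemma ruined_cons x N b l : 0 < x -> ruined_by x (S N) (b :: l) = ruined_by (xb b x) N l.
Proof.
  intros Hx. unfold ruined_by.
  replace (seq 0 (S (S N))) with (0%nat :: seq 1 (S N)) by reflexivity.
  rewrite existsb_cons0. simpl wealth at 1. destruct (Rle_dec x 0); [lra|]. rewrite Bool.orb_false_l.
  rewrite existsb_seq_shift.
  apply existsb_ext. intros i.
  rewrite wealth_cons.
  assert (0 < cb b) by (destruct b; simpl; lra).
  destruct (Rle_dec (cb b * wealth (xb b x) (xi_of l) i) 0), (Rle_dec (wealth (xb b x) (xi_of l) i) 0); auto.
  - exfalso; apply n0. apply Rmult_le_reg_l with (cb b); lra.
  - exfalso; apply n0. assert (cb b * wealth (xb b x) (xi_of l) i <= cb b * 0) by (apply Rmult_le_compat_l; lra). lra.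
Qed.

Lemma ruin_step x p N : 0 < x ->
  ruin_prob_by x p (S N) = p * ruin_prob_by ((x+1)/2) p N + (1-p) * ruin_prob_by (2*x-2) p N.
Proof.
  intros Hx. rewrite !ruin_prob_by_eq. simpl all_paths.
  rewrite lsum_app, !lsum_map, <- !lsum_scal. f_equal; apply lsum_ext; intros l;
  rewrite ruined_cons by auto; simpl xb; rewrite path_prob_cons;
  destruct ruined_by; lra.
Qed.

Definition U p N x := ruin_prob_by x p N.

Lemma U_neg p N x : x <= 0 -> U p N x = 1.
Proof. apply ruin_neg. Qed.
Lemma U_step p N x : 0 < x -> U p (S N) x = p * U p N ((x+1)/2) + (1-p) * U p N (2*x-2).
Proof. apply ruin_step. Qed.
Lemma U_0 p x : 0 < x -> U p 0 x = 0.
Proof. intros; unfold U; rewrite ruin0; destruct Rle_dec; lra. Qed.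

Lemma U_bounds p N x : 0 < p < 1 -> 0 <= U p N x <= 1.
Proof.
  intros hp. revert x; induction N; intros x.
  - destruct (Rle_dec x 0). rewrite U_neg; lra. rewrite U_0; lra.
  - destruct (Rle_dec x 0). rewrite U_neg; lra.
    rewrite U_step by lra.
    pose proof (IHN ((x+1)/2)). pose proof (IHN (2*x-2)). nra.
Qed.

Lemma U_mono_x p N x x' : 0 < p < 1 -> x <= x' -> U p N x' <= U p N x.
Proof.
  intros hp. revert x x'; induction N; intros x x' H.
  - destruct (Rle_dec x' 0). rewrite !U_neg; lra.
    rewrite U_0 by lra. apply U_bounds; auto.
  - destruct (Rle_dec x' 0). rewrite !U_neg; lra.
    destruct (Rle_dec x 0). rewrite (U_neg p _ x) by lra. apply U_bounds; auto.
    rewrite !U_step by lra.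
    pose proof (IHN ((x+1)/2) ((x'+1)/2) ltac:(lra)). pose proof (IHN (2*x-2) (2*x'-2) ltac:(lra)). nra.
Qed.

Lemma U_mono_N p N x : 0 < p < 1 -> U p N x <= U p (S N) x.
Proof.
  intros hp. revert x; induction N; intros x.
  - destruct (Rle_dec x 0). rewrite !U_neg; lra. rewrite U_0 by lra. apply U_bounds; auto.
  - destruct (Rle_dec x 0). rewrite !U_neg; lra.
    rewrite (U_step p (S N)) by lra. rewrite U_step by lra.
    pose proof (IHN ((x+1)/2)). pose proof (IHN (2*x-2)). nra.
Qed.

Lemma U_mono_N' p n m x : 0 < p < 1 -> (n <= m)%nat -> U p n x <= U p m x.
Proof.
  intros hp H; induction H. lra. pose proof (U_mono_N p m x hp); lra.
Qed.

Lemma U_trap p k x : 0 < p < 1 -> x <= 2 ->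
  1 - U p (3*k) x <= (1 - p * (1-p)^2) ^ k.
Proof.
  intros hp. revert x; induction k; intros x Hx.
  - simpl. pose proof (U_bounds p 0 x hp); lra.
  - set (c := 1 - p * (1-p)^2).
    assert (Hc: p <= c) by (unfold c; nra).
    assert (Hb : forall j z, z <= 2 -> 1 - U p (3*k + j) z <= c^k).
    { intros j z Hz. pose proof (U_mono_N' p (3*k) (3*k+j) z hp ltac:(lia)). 
      pose proof (IHk z Hz). fold c in H0. lra. }
    assert (0 <= p*(1-p)^2) by (apply Rmult_le_pos; [lra| apply pow2_ge_0]).
    assert (Hc1: c <= 1) by (unfold c; nra).
    assert (Hck : 0 <= c^k) by (apply pow_le; unfold c; nra).
    replace (3 * S k)%nat with (S (3*k + 2))%nat by lia.
    destruct (Rle_dec x 0). rewrite U_neg by lra. simpl; fold c; nra.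
    rewrite U_step by lra.
    destruct (Rle_dec x 1).
    + rewrite (U_neg p _ (2*x-2)) by lra.
      pose proof (Hb 2%nat ((x+1)/2) ltac:(lra)). change (c ^ S k) with (c * c ^ k).
      assert (p * (1 - U p (3 * k + 2) ((x + 1) / 2)) <= p * c^k) by (apply Rmult_le_compat_l; lra).
      assert (p * c^k <= c * c^k) by (apply Rmult_le_compat_r; lra). lra.
    + replace (3*k+2)%nat with (S (3*k+1)) by lia.
      rewrite (U_step p _ ((x+1)/2)) by lra.
      set (x2 := 2 * ((x + 1) / 2) - 2).
      replace (3*k+1)%nat with (S (3*k+0)) by lia.
      rewrite (U_step p _ x2) by (unfold x2; lra).
      rewrite (U_neg p _ (2*x2-2)) by (unfold x2; lra).
      pose proof (Hb 0%nat ((x2+1)/2) ltac:(unfold x2; lra)).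
      pose proof (Hb 1%nat ((((x+1)/2)+1)/2) ltac:(lra)).
      pose proof (Hb 2%nat (2*x-2) ltac:(lra)).
      replace (S (3*k+0)) with (3*k+1)%nat in * by lia.
      change (c ^ S k) with (c * c ^ k).
      set (a := U p (3 * k + 0) ((x2 + 1) / 2)) in *.
      set (b := U p (3 * k + 1) ((((x + 1) / 2) + 1) / 2)) in *.
      set (d := U p (3 * k + 2) (2 * x - 2)) in *.
      assert (E: c * c^k = p^2 * c^k + p^2*(1-p)*c^k + (1-p)*c^k) by (unfold c; ring).
      rewrite E.
      assert (p^2 * (1-b) <= p^2 * c^k) by (apply Rmult_le_compat_l; nra).
      assert (p^2*(1-p) * (1-a) <= p^2*(1-p) * c^k) by (apply Rmult_le_compat_l; [apply Rmult_le_pos; nra|lra]).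
      assert ((1-p) * (1-d) <= (1-p) * c^k) by (apply Rmult_le_compat_l; lra).
      replace (S (3 * k + 1)) with (3*k+2)%nat by lia. fold d.
      nra.
Qed.

Definition L p x := real (Lim_seq (fun N => U p N x)).

Lemma L_lim p x : 0 < p < 1 -> is_lim_seq (fun N => U p N x) (L p x).
Proof.
  intros hp.
  destruct (ex_finite_lim_seq_incr (fun N => U p N x) 1) as [l Hl].
  - intros n; apply U_mono_N; auto.
  - intros n; apply U_bounds; auto.
  - unfold L. rewrite (is_lim_seq_unique _ _ Hl). simpl. exact Hl.
Qed.

Lemma L_ge p N x : 0 < p < 1 -> U p N x <= L p x.
Proof.
  intros hp. apply (is_lim_seq_incr_compare (fun N => U p N x)). apply L_lim; auto.
  intros n; apply U_mono_N; auto.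
Qed.

Lemma L_le_gen p x c : 0 < p < 1 -> (forall N, U p N x <= c) -> L p x <= c.
Proof.
  intros hp H. pose proof (is_lim_seq_le (fun N => U p N x) (fun _ => c) (L p x) c H (L_lim p x hp) (is_lim_seq_const c)).
  simpl in H0. exact H0.
Qed.

Lemma L_bounds p x : 0 < p < 1 -> 0 <= L p x <= 1.
Proof.
  intros hp. split.
  - pose proof (L_ge p 0 x hp). pose proof (U_bounds p 0 x hp). lra.
  - apply L_le_gen; auto. intros; apply U_bounds; auto.
Qed.

Lemma L_neg p x : 0 < p < 1 -> x <= 0 -> L p x = 1.
Proof.
  intros hp Hx. pose proof (L_bounds p x hp). pose proof (L_ge p 0 x hp).
  rewrite U_neg in H0; auto. lra.
Qed.

Lemma L_mono p x x' : 0 < p < 1 -> x <= x' -> L p x' <= L p x.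
Proof.
  intros hp H. apply L_le_gen; auto. intros N.
  pose proof (U_mono_x p N x x' hp H). pose proof (L_ge p N x hp). lra.
Qed.

Lemma L_step p x : 0 < p < 1 -> 0 < x -> L p x = p * L p ((x+1)/2) + (1-p) * L p (2*x-2).
Proof.
  intros hp Hx.
  assert (H1: is_lim_seq (fun N => U p (S N) x) (p * L p ((x+1)/2) + (1-p) * L p (2*x-2))).
  { apply (is_lim_seq_ext (fun N => p * U p N ((x+1)/2) + (1-p) * U p N (2*x-2))).
    intros n; rewrite U_step; auto.
    apply is_lim_seq_plus'; apply (is_lim_seq_scal_l _ _ (Finite _)); apply L_lim; auto. }
  apply (is_lim_seq_incr_1 (fun N => U p N x)) in H1.
  pose proof (L_lim p x hp).
  assert (E: Finite (L p x) = Finite (p * L p ((x + 1) / 2) + (1 - p) * L p (2 * x - 2))).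
  { rewrite <- (is_lim_seq_unique _ _ H1). rewrite <- (is_lim_seq_unique _ _ H). reflexivity. }
  injection E; auto.
Qed.

Lemma L_trap p x : 0 < p < 1 -> x <= 2 -> L p x = 1.
Proof.
  intros hp Hx. pose proof (L_bounds p x hp).
  set (c := 1 - p * (1-p)^2).
  assert (0 <= p*(1-p)^2) by (apply Rmult_le_pos; [lra| apply pow2_ge_0]).
  assert (0 < p*(1-p)^2) by (apply Rmult_lt_0_compat; [lra| apply pow_lt; lra]).
  assert (Hc: Rabs c < 1) by (unfold c; rewrite Rabs_right; nra).
  destruct (Req_dec (L p x) 1) as [E|E]; auto. exfalso.
  destruct (pow_lt_1_zero c Hc (1 - L p x)) as [N HN]. lra.
  specialize (HN N (le_n N)).
  pose proof (U_trap p N x hp Hx). pose proof (L_ge p (3*N) x hp).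
  fold c in H2. rewrite Rabs_right in HN. lra. apply Rle_ge, pow_le; unfold c; nra.
Qed.

Lemma h_zero (p : R) (h : nat -> R) : 1/2 <= p < 1 -> (forall j, 0 <= h j <= 1) ->
  h 0%nat = (1-p) * h 1%nat -> (forall i, h (S i) <= p * h i + (1-p) * h (S (S i))) ->
  forall j, h j = 0.
Proof.
  intros hp hb h0 hs.
  set (d := fun i => h (S i) - h i).
  assert (D1 : forall i, p * d i <= (1-p) * d (S i)).
  { intros i; unfold d; specialize (hs i); lra. }
  assert (Dnn : forall i, 0 <= d i).
  { induction i. unfold d; pose proof (hb 1%nat); nra.
    specialize (D1 i). nra. }
  assert (Dm : forall i, d i <= d (S i)).
  { intros i. specialize (D1 i). specialize (Dnn i). nra. }
  assert (Dm' : forall i k, d i <= d (k + i)%nat).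
  { intros i k; induction k. simpl; lra. simpl. specialize (Dm (k+i)%nat). lra. }
  assert (Dk : forall i k, h i + INR k * d i <= h (k + i)%nat).
  { intros i k; induction k. simpl; lra.
    rewrite S_INR. specialize (Dm' i k). 
    replace (h (S k + i)%nat) with (h (k+i)%nat + d (k+i)%nat) by (unfold d; simpl; ring). lra. }
  assert (D0 : forall i, d i = 0).
  { intros i. destruct (Rle_dec (d i) 0). specialize (Dnn i); lra.
    destruct (INR_unbounded (2 / d i)) as [k Hk].
    specialize (Dk i k). pose proof (hb i). pose proof (hb (k+i)%nat).
    assert (INR k * d i > 2).
    { apply Rlt_gt. replace 2 with ((2 / d i) * d i) by (field; lra).
      apply Rmult_lt_compat_r; lra. }
    lra. }
  assert (H1: h 1%nat = 0).
  { specialize (D0 0%nat). unfold d in D0. nra. }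
  intros j; induction j. rewrite h0, H1; ring.
  specialize (D0 j). unfold d in D0. lra.
Qed.

Lemma pow2_big (a : R) : exists j : nat, a <= 2 ^ j.
Proof.
  destruct (INR_unbounded a) as [j Hj]. exists j.
  assert (forall n, INR n <= 2 ^ n).
  { induction n. simpl; lra. rewrite S_INR. simpl. assert (1 <= 2^n) by (apply pow_R1_Rle; lra). lra. }
  specialize (H j); lra.
Qed.

Lemma dirB_p p x : 1/2 <= p < 1 -> 2 < x -> L p x = 1.
Proof.
  intros hp Hx. assert (hp' : 0 < p < 1) by lra.
  set (h := fun j : nat => 1 - L p (2 + 2^j)).
  assert (Hz : forall j, h j = 0).
  { apply (h_zero p); auto.
    - intros j; unfold h; pose proof (L_bounds p (2 + 2^j) hp'); lra.
    - unfold h. simpl. replace (2 + 1) with 3 by ring. replace (2 + 2 * 1) with 4 by ring.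
      rewrite (L_step p 3) by lra. replace ((3+1)/2) with 2 by field. replace (2*3-2) with 4 by ring.
      rewrite (L_trap p 2) by lra. ring.
    - intros i. unfold h.
      rewrite (L_step p (2 + 2 ^ S i)) by (pose proof (pow_lt 2 (S i)); lra).
      replace (2 * (2 + 2 ^ S i) - 2) with (2 + 2 ^ S (S i)) by (simpl; ring).
      pose proof (L_mono p ((2 + 2 ^ S i + 1) / 2) (2 + 2^i) hp').
      assert ((2 + 2 ^ S i + 1) / 2 <= 2 + 2 ^ i) by (simpl; lra).
      specialize (H H0). nra. }
  destruct (pow2_big (x - 2)) as [j Hj].
  pose proof (Hz j). unfold h in H.
  pose proof (L_mono p x (2 + 2^j) hp' ltac:(lra)). pose proof (L_bounds p x hp'). lra.
Qed.

Lemma bernoulli r m : 0 <= r -> 1 + INR m * r <= (1 + r) ^ m.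
Proof.
  intros Hr; induction m. simpl; lra.
  rewrite S_INR; simpl. assert (0 <= INR m * r) by (apply Rmult_le_pos; [apply pos_INR|lra]).
  nra.
Qed.

Lemma exists_beta p : 0 < p < 1/2 ->
  exists b, 0 < b <= 1 /\ p * Rpower 2 b + (1-p) / Rpower 2 b < 1.
Proof.
  intros hp. set (r := (1-p)/p).
  assert (Hr : 1 < r) by (unfold r; apply Rlt_div_r; lra).
  destruct (INR_unbounded (1 / (r - 1))) as [m Hm].
  assert (Hm0 : 0 < INR m) by (assert (0 < 1/(r-1)) by (apply Rdiv_lt_0_compat; lra); lra).
  assert (Hrm : 2 < r ^ m).
  { pose proof (bernoulli (r-1) m ltac:(lra)). replace (1 + (r-1)) with r in H by ring.
    assert (INR m * (r-1) > 1).
    { assert (E: 1/(r-1) * (r-1) = 1) by (field; lra).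
      pose proof (Rmult_gt_compat_r (r-1) (INR m) (1/(r-1)) ltac:(lra) Hm). lra. }
    lra. }
  exists (/ INR m). split. split. apply Rinv_0_lt_compat; auto.
  { assert (1 <= INR m). { destruct m. simpl in Hm0; lra. rewrite S_INR; pose proof (pos_INR m); lra. }
    rewrite <- Rinv_1. apply Rinv_le_contravar; lra. }
  set (t := Rpower 2 (/ INR m)).
  assert (Ht1 : 1 < t). { unfold t. rewrite <- (Rpower_O 2) by lra. apply Rpower_lt; [lra|]. apply Rinv_0_lt_compat; auto. }
  assert (Htm : t ^ m = 2).
  { unfold t. rewrite <- Rpower_pow by (apply exp_pos). rewrite Rpower_mult.
    rewrite Rinv_l by lra. apply Rpower_1; lra. }
  assert (Htr : t < r).
  { destruct (Rlt_or_le t r); auto. exfalso.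
    assert (r ^ m <= t ^ m) by (apply pow_incr; lra). lra. }
  assert (p * t < 1 - p) by (unfold r in Htr; apply Rlt_div_r in Htr; lra).
  apply Rmult_lt_reg_r with t. lra.
  field_simplify; [|lra]. nra.
Qed.

Lemma E_half b z : 0 < z -> Rpower (z/2) b = Rpower z b / Rpower 2 b.
Proof.
  intros Hz. unfold Rpower, Rdiv. rewrite ln_mult; [| lra | apply Rinv_0_lt_compat; lra].
  rewrite ln_Rinv by lra. rewrite Rmult_plus_distr_l, exp_plus.
  rewrite <- exp_Ropp. f_equal. f_equal. ring.
Qed.

Lemma E_ge_base b a : 0 < b <= 1 -> 0 < a <= 1 -> a <= Rpower a b.
Proof.
  intros Hb Ha. unfold Rpower.
  assert (ln a <= 0).
  { destruct (Req_dec a 1). subst; rewrite ln_1; lra. rewrite <- ln_1. left; apply ln_increasing; lra. }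
  rewrite <- (exp_ln a) at 1 by lra.
  assert (ln a <= b * ln a) by nra.
  destruct H0. left; apply exp_increasing; auto. right; f_equal; exact H0.
Qed.

Lemma E_2z b z : 1 <= z -> 0 < b <= 1 ->
  Rpower 2 b * Rpower z b * (1 - 1/(2*z)) <= Rpower (2*z-1) b.
Proof.
  intros Hz Hb.
  replace (2*z-1) with ((2*z) * (1 - 1/(2*z))) by (field; lra).
  rewrite <- Rpower_mult_distr by (try apply Rmult_lt_0_compat; try lra; 
     assert (1/(2*z) <= 1/2) by (apply Rmult_le_compat_l; [lra| apply Rinv_le_contravar; lra]); 
     assert (0 < 1/(2*z)) by (apply Rdiv_lt_0_compat; lra); lra).
  rewrite <- Rpower_mult_distr by lra.
  assert (1/(2*z) <= 1/2) by (apply Rmult_le_compat_l; [lra| apply Rinv_le_contravar; lra]).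
  assert (0 < 1/(2*z)) by (apply Rdiv_lt_0_compat; lra).
  apply Rmult_le_compat_l. left; apply Rmult_lt_0_compat; apply exp_pos.
  apply E_ge_base; lra.
Qed.

Lemma aux_ineq A e d : 0 < A < 1 -> 0 < d <= 1 -> 0 < e <= d / 2 -> A / (1 - e) <= A + d.
Proof.
  intros HA Hd He. apply Rmult_le_reg_r with (1 - e). lra.
  unfold Rdiv. rewrite Rmult_assoc, Rinv_l by lra. nra.
Qed.

Lemma dirA_exists p : 0 < p < 1/2 -> exists X c, c < 1 /\ forall N, U p N X <= c.
Proof.
  intros hp. assert (hp' : 0 < p < 1) by lra.
  destruct (exists_beta p hp) as [b [Hb Hpt]].
  set (t := Rpower 2 b) in *.
  assert (Ht1 : 1 < t). { unfold t. rewrite <- (Rpower_O 2) by lra. apply Rpower_lt; lra. }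
  set (q := 1 - p) in *.
  set (d := 1 - p * t - q / t).
  assert (Hqt : 0 < q / t < 1).
  { split. apply Rdiv_lt_0_compat; unfold q; lra. apply Rlt_div_l; unfold q; lra. }
  assert (Hd : 0 < d <= 1) by (unfold d; split; [lra|]; assert (0 < p * t) by nra; lra).
  set (Z0 := 1 + 1 / d).
  assert (HZ0 : 1 < Z0) by (unfold Z0; assert (0 < 1/d) by (apply Rdiv_lt_0_compat; lra); lra).
  set (K := Rpower Z0 b).
  assert (EP : forall w, 0 < Rpower w b) by (intros; apply exp_pos).
  set (Phi := fun z => if Rle_dec z Z0 then 1 else K / Rpower z b).
  assert (PhiK : forall w, 0 < w -> Phi w <= K / Rpower w b).
  { intros w Hw. unfold Phi. destruct Rle_dec; [|lra].
    assert (Rpower w b <= K) by (apply Rle_Rpower_l; lra).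
    specialize (EP w). apply Rmult_le_reg_r with (Rpower w b); auto.
    unfold Rdiv; rewrite Rmult_assoc, Rinv_l by lra. lra. }
  assert (Phi0 : forall w, 0 <= Phi w).
  { intros w; unfold Phi; destruct Rle_dec. lra. left; unfold K; apply Rdiv_lt_0_compat; apply EP. }
  assert (Claim : forall N x, U p N x <= Phi (x - 1)).
  { induction N; intros x.
    - destruct (Rle_dec x 0). rewrite U_neg by auto. unfold Phi; destruct Rle_dec; lra.
      rewrite U_0 by lra. auto.
    - destruct (Rle_dec (x - 1) Z0).
      + unfold Phi; destruct Rle_dec; [|lra]. apply U_bounds; auto.
      + assert (Hx0 : 0 < x) by lra. set (z := x - 1) in *.
        assert (Hz : Z0 < z) by lra.
        rewrite U_step by exact Hx0.
        pose proof (IHN ((x+1)/2)) as H1. pose proof (IHN (2*x-2)) as H2.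
        replace ((x+1)/2 - 1) with (z/2) in H1 by (unfold z; field).
        replace (2*x-2-1) with (2*z-1) in H2 by (unfold z; ring).
        pose proof (PhiK (z/2) ltac:(lra)) as K1. pose proof (PhiK (2*z-1) ltac:(lra)) as K2.
        rewrite E_half in K1 by lra. fold t in K1.
        pose proof (E_2z b z ltac:(lra) Hb) as E2. fold t in E2.
        set (e := Rpower z b) in *. set (eps := 1/(2*z)) in *.
        assert (He : 0 < e) by apply EP.
        assert (Heps : 0 < eps <= d / 2).
        { unfold eps. split. apply Rdiv_lt_0_compat; lra.
          assert (1/d < z) by (unfold Z0 in Hz; lra).
          assert (1 < z * d).
          { apply Rmult_lt_compat_r with (r := d) in H; [|lra].
            unfold Rdiv in H. rewrite Rmult_1_l, Rinv_l in H by lra. lra. }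
          apply Rmult_le_reg_r with (2*z). lra. unfold Rdiv. field_simplify; lra. }
        assert (HK : 0 < K) by apply EP.
        assert (K2' : K / Rpower (2*z-1) b <= K / (t * e * (1 - eps))).
        { apply Rmult_le_compat_l. lra. apply Rinv_le_contravar; auto.
          apply Rmult_lt_0_compat. nra. lra. }
        assert (Hx : q * (K / (t * e * (1 - eps))) = (K / e) * ((q / t) / (1 - eps))) by (field; repeat split; lra).
        assert (Hy : K / (e / t) = (K / e) * t) by (field; split; lra).
        pose proof (aux_ineq (q/t) eps d Hqt Hd Heps) as AI.
        assert (HKe : 0 < K / e) by (apply Rdiv_lt_0_compat; lra).
        assert (Phi z = K / e) by (unfold Phi; destruct Rle_dec; [lra|reflexivity]).
        rewrite H.
        assert (p * U p N ((x + 1) / 2) <= p * ((K/e) * t)) by (apply Rmult_le_compat_l; lra).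
        assert (q * U p N (2 * x - 2) <= q * (K / (t * e * (1 - eps)))).
        { apply Rmult_le_compat_l. unfold q; lra. lra. }
        assert ((K / e) * ((q / t) / (1 - eps)) <= (K/e) * (q/t + d)).
        { apply Rmult_le_compat_l; lra. }
        assert (E: p * ((K/e) * t) + (K/e) * (q/t + d) = K / e).
        { unfold d. field. lra. }
        fold q. lra. }
  exists (Z0 + 2), (K / Rpower (Z0 + 1) b). split.
  - assert (K < Rpower (Z0+1) b) by (apply Rlt_Rpower_l; lra).
    specialize (EP (Z0+1)). apply Rlt_div_l; lra.
  - intros N. specialize (Claim N (Z0 + 2)). replace (Z0 + 2 - 1) with (Z0 + 1) in Claim by ring.
    unfold Phi in Claim. destruct Rle_dec; [lra|]. exact Claim.
Qed.

Lemma L_prop p x k : 0 < p < 1 -> 2 < x -> L p x = 1 -> L p (2 + 2^k * (x-2)) = 1.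
Proof.
  intros hp Hx H. induction k. simpl. replace (2 + 1 * (x-2)) with x by ring. auto.
  set (y := 2 + 2 ^ k * (x - 2)) in *.
  assert (0 < y) by (unfold y; assert (0 < 2^k) by (apply pow_lt; lra); nra).
  rewrite (L_step p y hp H0) in IHk.
  pose proof (L_bounds p ((y+1)/2) hp). pose proof (L_bounds p (2*y-2) hp).
  replace (2 + 2 ^ S k * (x - 2)) with (2*y-2) by (unfold y; simpl; ring).
  destruct (Req_dec (L p (2*y-2)) 1); auto.
  exfalso. assert ((1-p) * L p (2*y-2) < (1-p) * 1) by (apply Rmult_lt_compat_l; lra).
  nra.
Qed.

Lemma dirA p x : 0 < p < 1/2 -> 2 < x -> L p x < 1.
Proof.
  intros hp Hx. assert (hp' : 0 < p < 1) by lra.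
  destruct (dirA_exists p hp) as [X [c [Hc HX]]].
  assert (LX : L p X < 1) by (pose proof (L_le_gen p X c hp' HX); lra).
  destruct (Rlt_or_le (L p x) 1) as [|Hge]; auto. exfalso.
  assert (L p x = 1) by (pose proof (L_bounds p x hp'); lra).
  destruct (pow2_big ((X - 2) / (x - 2))) as [k Hk].
  pose proof (L_prop p x k hp' Hx H).
  assert (X <= 2 + 2 ^ k * (x - 2)).
  { apply Rmult_le_compat_r with (r := x - 2) in Hk; [|lra].
    unfold Rdiv in Hk. rewrite Rmult_assoc, Rinv_l, Rmult_1_r in Hk by lra. lra. }
  pose proof (L_mono p X (2 + 2 ^ k * (x - 2)) hp' H1). lra.
Qed.

Theorem theorem1p1 (p x : R) (hp : 0 < p < 1) (hx : 1 <= x) :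
  ruin_prob x p < 1 <-> (2 < x /\ p < 1 / 2).
Proof.
  change (ruin_prob x p) with (L p x). split.
  - intros H. destruct (Rle_or_lt x 2). rewrite L_trap in H; auto; lra.
    split; auto. destruct (Rlt_or_le p (1/2)); auto.
    rewrite dirB_p in H; auto; lra.
  - intros [H1 H2]. apply dirA; auto; lra.
Qed.
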